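(* Let $b>0$ and let $R>0$ be such that, for the functions \[ \begin{aligned} \underline u_{\rm out}(r) &= Lr^{-m} - br^{-l} \log \frac{r}{R},\\ \underline v_{\rm out}(r) &= m(n-2-m)Lr^{-m-2} +\Big[- l(n-2-l) \log \frac{r}{R} + (n-2-2l)\Big]br^{-l-2},\\ \underline w_{\rm out}(r) &= m(m+2)(n-2-m)(n-4-m)Lr^{-m-4} - l(l+2)(n-2-l)(n-4-l)br^{-l-4} \log \frac{r}{R} \\ &\qquad + (n-2-2l)(l+2)(n-4-l) b r^{-l-4}, \end{aligned} \] the numbers $\underline r_1 = \sup\{ r>0 : \underline u_{\rm out}(r) \leqslant 0 \}$, $\underline r_2 = \sup\{ r>0 : \underline v_{\rm out}(r) \leqslant 0 \}$, $\underline r_3 = \sup\{ r>0 : \underline w_{\rm out}(r) \leqslant 0 \}$ are well defined and satisfy $R<\underline r_1<\underline r_2<\underline r_3<+\infty$. Then \[ -\Delta \underline u_{\rm out} = \underline v_{\rm out} \ \text{ for all } r>0,\qquad -\Delta \underline v_{\rm out} = \underline w_{\rm out} \ \text{ for all } r>0,\qquad -\Delta \underline w_{\rm out} \leqslant \underline u_{\rm out}^p \ \text{ for all } r>\underline r_1 . \]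
   Context: Let $n\geqslant 15$ and $p=p_{\mathsf{JL}}(6,n)$, where $p_{\mathsf{JL}}(6,n)=\frac{(n+4)\sqrt{3} - \sqrt{\sqrt[3]{K_0+K_1}+ \sqrt[3]{K_0-K_1} + 3n^2+32 }}{(n-8)\sqrt{3} - \sqrt{\sqrt[3]{K_0+K_1} + \sqrt[3]{K_0-K_1} + 3n^2+32 }}$ with $2K_0 =-27n^6+324 n^5-756n^4-2592 n^3 + 25776 n^2 +5184 n -23744$, $2K_1 = \sqrt{(2K_0)^2 - 4(192n^2+256)^3}$. Let $m=6/(p-1)$, $L=\big(m(m+2)(m+4)(n-2-m)(n-4-m)(n-6-m)\big)^{1/(p-1)}$, let $\lambda_3$ be the smallest positive root of $P(\lambda)=(m+\lambda)(m+\lambda+2)(m+\lambda+4)(n-2-m-\lambda)(n-4-m-\lambda)(n-6-m-\lambda)-pL^{p-1}$, and set $l=m+\lambda_3$. For a function $f$ of $r=|x|$, $\Delta f$ denotes the Laplacian in $\mathbf R^n$ of $x\mapsto f(|x|)$, i.e. $f''+\frac{n-1}{r}f'$. *)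

(* Defs.v *)
From Stdlib Require Import Reals.
From Coquelicot Require Import Coquelicot.
Open Scope R_scope.

Definition cbrt (x : R) : R :=
  if Rlt_dec 0 x then Rpower x (1/3)
  else if Rlt_dec x 0 then - Rpower (- x) (1/3) else 0.

Definition K0 (n : R) : R :=
  (-27*n^6 + 324*n^5 - 756*n^4 - 2592*n^3 + 25776*n^2 + 5184*n - 23744) / 2.
Definition K1 (n : R) : R :=
  sqrt ((2 * K0 n)^2 - 4 * (192*n^2 + 256)^3) / 2.

Definition pJL6 (n : R) : R :=
  let S := sqrt (cbrt (K0 n + K1 n) + cbrt (K0 n - K1 n) + 3*n^2 + 32) in
  ((n + 4) * sqrt 3 - S) / ((n - 8) * sqrt 3 - S).

Definition mexp (n : R) : R := 6 / (pJL6 n - 1).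

Definition Lconst (n : R) : R :=
  let p := pJL6 n in let m := mexp n in
  Rpower (m*(m+2)*(m+4)*(n-2-m)*(n-4-m)*(n-6-m)) (1/(p-1)).

Definition Ppoly (n lam : R) : R :=
  let p := pJL6 n in let m := mexp n in
  (m+lam)*(m+lam+2)*(m+lam+4)*(n-2-m-lam)*(n-4-m-lam)*(n-6-m-lam)
  - p * Rpower (Lconst n) (p-1).

Definition smallest_pos_root (n lam : R) : Prop :=
  0 < lam /\ Ppoly n lam = 0 /\ (forall mu, 0 < mu < lam -> Ppoly n mu <> 0).

Definition radLap (n : R) (f : R -> R) (r : R) : R :=
  Derive (Derive f) r + (n - 1) / r * Derive f r.

Definition u_out (n b Rr l r : R) : R :=
  Lconst n * Rpower r (- mexp n) - b * Rpower r (- l) * ln (r / Rr).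

Definition v_out (n b Rr l r : R) : R :=
  let m := mexp n in
  m*(n-2-m)*Lconst n * Rpower r (-m-2)
  + (- l*(n-2-l) * ln (r / Rr) + (n-2-2*l)) * b * Rpower r (-l-2).

Definition w_out (n b Rr l r : R) : R :=
  let m := mexp n in
  m*(m+2)*(n-2-m)*(n-4-m)*Lconst n * Rpower r (-m-4)
  - l*(l+2)*(n-2-l)*(n-4-l)*b*Rpower r (-l-4) * ln (r / Rr)
  + (n-2-2*l)*(l+2)*(n-4-l)*b*Rpower r (-l-4).

Definition is_sup_nonpos (f : R -> R) (s : R) : Prop :=
  is_lub (fun r => 0 < r /\ f r <= 0) s.

(* Main.v *)
Require Import Defs.
From Stdlib Require Import Reals.
From Coquelicot Require Import Coquelicot.
From Stdlib Require Import Lra Psatz FunctionalExtensionality.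
Open Scope R_scope.

Ltac nz := repeat split; try (intro; lra); try lra.


Lemma cbrt_cube x : cbrt x ^ 3 = x.
Proof.
  unfold cbrt. destruct (Rlt_dec 0 x) as [H|H].
  - rewrite <- Rpower_pow by (unfold Rpower; apply exp_pos).
    rewrite Rpower_mult. replace (1/3 * INR 3) with 1 by (simpl; field). apply Rpower_1; auto.
  - destruct (Rlt_dec x 0) as [H'|H'].
    + replace ((- Rpower (- x) (1/3))^3) with (- (Rpower (- x) (1/3))^3) by ring.
      rewrite <- Rpower_pow by (unfold Rpower; apply exp_pos).
      rewrite Rpower_mult. replace (1/3 * INR 3) with 1 by (simpl; field).
      rewrite Rpower_1 by lra. ring.
    + assert (x = 0) by lra. subst. ring.
Qed.

Lemma poly_nonneg_shift (N : R) : 15 <= N ->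
  let t := N - 15 in
  0 <= t /\ 0 <= t^2 /\ 0 <= t^3 /\ 0 <= t^4 /\ 0 <= t^5 /\ 0 <= t^6 /\ 0 <= t^7
  /\ 0 <= t^8 /\ 0 <= t^9 /\ 0 <= t^10 /\ 0 <= t^11 /\ 0 <= t^12.
Proof. intros H t. assert (0 <= t) by (unfold t; lra).
  repeat split; try apply pow_le; lra. Qed.

Definition cc (N : R) := 192*N^2+256.

Lemma disc_nonneg N : 15 <= N -> 0 <= (2 * K0 N)^2 - 4 * (cc N)^3.
Proof.
  intros H. pose proof (poly_nonneg_shift N H) as P. set (t := N - 15) in P.
  replace N with (t+15) by (unfold t; ring).
  unfold K0, cc.
  assert (E : (2 * ((-27*(t+15)^6 + 324*(t+15)^5 - 756*(t+15)^4 - 2592*(t+15)^3 + 25776*(t+15)^2 + 5184*(t+15) - 23744) / 2))^2 - 4 * (192*(t+15)^2+256)^3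
   = 10214160759983817 + 10585461850409628*t + 4894534148604354*t^2 + 1347076448060364*t^3 + 246965545626615*t^4 + 31863611628216*t^5 + 2971699904988*t^6 + 202081266936*t^7 + 9951685191*t^8 + 346289580*t^9 + 8084610*t^10 + 113724*t^11 + 729*t^12) by (field).
  rewrite E. lra.
Qed.

Definition fcub N y := y^3 - 3 * cc N * y - 2 * K0 N.

Lemma fy0_pos N : 15 <= N -> 0 < fcub N (160 - 48*N).
Proof.
  intros H. pose proof (poly_nonneg_shift N H) as P. set (t := N - 15) in P.
  replace N with (t+15) by (unfold t; ring).
  unfold fcub, K0, cc.
  assert (E : (160 - 48 * (t + 15)) ^ 3 - 3 * (192 * (t + 15) ^ 2 + 256) * (160 - 48 * (t + 15)) -
   2 * ((-27 * (t + 15) ^ 6 + 324 * (t + 15) ^ 5 - 756 * (t + 15) ^ 4 - 2592 * (t + 15) ^ 3 +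
     25776 * (t + 15) ^ 2 + 5184 * (t + 15) - 23744) / 2)
   = 66339 + 22959450*t + 7960869*t^2 + 1058508*t^3 + 67581*t^4 + 2106*t^5 + 27*t^6) by field.
  rewrite E. lra.
Qed.

Lemma fy1_neg N : 15 <= N -> fcub N (-3*N^2-32) < 0.
Proof.
  intros H. pose proof (poly_nonneg_shift N H) as P. set (t := N - 15) in P.
  replace N with (t+15) by (unfold t; ring).
  unfold fcub, K0, cc.
  assert (E : (-3*(t+15)^2-32) ^ 3 - 3 * (192 * (t + 15) ^ 2 + 256) * (-3*(t+15)^2-32) -
   2 * ((-27 * (t + 15) ^ 6 + 324 * (t + 15) ^ 5 - 756 * (t + 15) ^ 4 - 2592 * (t + 15) ^ 3 +
     25776 * (t + 15) ^ 2 + 5184 * (t + 15) - 23744) / 2)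
   = -158546808 - 58825764*t - 8645616*t^2 - 629208*t^3 - 22680*t^4 - 324*t^5) by field.
  rewrite E. lra.
Qed.


Definition yy N := cbrt (K0 N + K1 N) + cbrt (K0 N - K1 N).

Lemma yy_cubic N : 15 <= N -> fcub N (yy N) = 0.
Proof.
  intros H. pose proof (disc_nonneg N H) as D.
  assert (K1s : K1 N ^ 2 = K0 N ^2 - cc N ^3).
  { unfold K1. unfold cc in D. replace ((sqrt ((2 * K0 N) ^ 2 - 4 * (192 * N ^ 2 + 256) ^ 3) / 2) ^ 2)
      with ((sqrt ((2 * K0 N) ^ 2 - 4 * (192 * N ^ 2 + 256) ^ 3))^2 / 4) by field.
    rewrite <- Rsqr_pow2, Rsqr_sqrt by lra. unfold cc. field. }
  set (A := cbrt (K0 N + K1 N)). set (B := cbrt (K0 N - K1 N)).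
  assert (HA : A^3 = K0 N + K1 N) by apply cbrt_cube.
  assert (HB : B^3 = K0 N - K1 N) by apply cbrt_cube.
  assert (cpos : 0 < cc N) by (unfold cc; nra).
  assert (HAB : (A*B)^3 = cc N ^3).
  { replace ((A*B)^3) with (A^3*B^3) by ring. rewrite HA, HB. nra. }
  assert (AB : A*B = cc N).
  { set (u := A*B) in *. set (c := cc N) in *. clearbody u c.
    assert (H0 : (u - c) * (u^2 + u*c + c^2) = 0).
    { replace ((u - c) * (u^2 + u*c + c^2)) with (u^3 - c^3) by ring. lra. }
    apply Rmult_integral in H0. destruct H0 as [H0|H0]; [lra|]. exfalso. assert (0 <= (u + c/2)^2) by apply pow2_ge_0. assert (0 < c^2) by (apply pow_lt; lra). nra. }
  unfold fcub, yy. fold A B.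
  replace ((A + B) ^ 3) with (A^3 + B^3 + 3*(A*B)*(A+B)) by ring.
  rewrite HA, HB, AB. ring.
Qed.

Lemma yy_bounds N : 15 <= N -> -3*N^2-32 < yy N < 160 - 48*N.
Proof.
  intros H. pose proof (yy_cubic N H) as Hy. pose proof (fy0_pos N H). pose proof (fy1_neg N H).
  set (y := yy N) in *. unfold fcub in *. set (c := cc N) in *.
  assert (Hc : c = 192*N^2+256) by reflexivity. clearbody y c.
  split.
  - set (y1 := -3*N^2-32) in *. assert (Hy1 : y1 = -3*N^2-32) by reflexivity. clearbody y1.
    assert (E: (y - y1) * (y^2 + y*y1 + y1^2 - 3*c) = (y ^ 3 - 3 * c * y - 2 * K0 N) - (y1 ^ 3 - 3 * c * y1 - 2 * K0 N)) by ring.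
    rewrite Hy in E.
    assert (P: 0 < y^2 + y*y1 + y1^2 - 3*c).
    { assert (y^2 + y*y1 + y1^2 >= 3/4*y1^2) by (pose proof (pow2_ge_0 (2*y+y1)); nra). assert (3/4*y1^2 - 3*c = N^2*(27/4*N^2 - 432)) by (rewrite Hc, Hy1; field).
      assert (0 < N^2*(27/4*N^2 - 432)) by (apply Rmult_lt_0_compat; nra). lra. }
    destruct (Rle_or_lt y y1); [|lra]. nra.
  - set (y0 := 160 - 48*N) in *. assert (Hy0 : y0 = 160 - 48*N) by reflexivity. clearbody y0.
    assert (E: (y - y0) * (y^2 + y*y0 + y0^2 - 3*c) = (y ^ 3 - 3 * c * y - 2 * K0 N) - (y0 ^ 3 - 3 * c * y0 - 2 * K0 N)) by ring.
    rewrite Hy in E.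
    assert (P: 0 < y^2 + y*y0 + y0^2 - 3*c).
    { assert (y^2 + y*y0 + y0^2 >= 3/4*y0^2) by (pose proof (pow2_ge_0 (2*y+y0)); nra). assert (3/4*y0^2 - 3*c = 1152*((N-2)*(N-8))) by (rewrite Hc, Hy0; field).
      assert (0 < (N-2)*(N-8)) by (apply Rmult_lt_0_compat; lra). lra. }
    destruct (Rle_or_lt y0 y); [|lra]. nra.
Qed.



Definition CC N := ((N-6)*(N-2)*(N+2)/8)^2.

Lemma key N : 15 <= N ->
  0 < mexp N /\ mexp N < (N-8)/2 /\ pJL6 N = (mexp N + 6) / mexp N /\
  (mexp N+2)*(mexp N+4)*(mexp N+6)*(N-2-mexp N)*(N-4-mexp N)*(N-6-mexp N) = CC N.
Proof.
  intros H. pose proof (yy_bounds N H) as [Y1 Y2]. pose proof (yy_cubic N H) as Hy.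
  assert (HS : pJL6 N = ((N + 4) * sqrt 3 - sqrt (yy N + 3*N^2 + 32)) / ((N - 8) * sqrt 3 - sqrt (yy N + 3*N^2 + 32))) by reflexivity.
  set (S := sqrt (yy N + 3*N^2 + 32)) in *.
  assert (S2 : S^2 = yy N + 3*N^2 + 32) by (unfold S; rewrite <- Rsqr_pow2; apply Rsqr_sqrt; lra).
  assert (Spos : 0 < S) by (unfold S; apply sqrt_lt_R0; lra).
  set (s3 := sqrt 3) in *.
  assert (s32 : s3^2 = 3) by (unfold s3; rewrite <- Rsqr_pow2; apply Rsqr_sqrt; lra).
  assert (s3pos : 0 < s3) by (unfold s3; apply sqrt_lt_R0; lra).
  set (y := yy N) in *. clearbody S s3 y.
  assert (Dpos : 0 < (N-8)*s3 - S).
  { assert (((N-8)*s3)^2 - S^2 = 160 - 48*N - y) by (replace (((N-8)*s3)^2) with ((N-8)^2*s3^2) by ring; rewrite s32, S2; ring).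
    assert (0 < (N-8)*s3) by (apply Rmult_lt_0_compat; lra).
    assert (((N-8)*s3 - S) * ((N-8)*s3 + S) > 0) by (replace (((N-8)*s3 - S) * ((N-8)*s3 + S)) with (((N-8)*s3)^2 - S^2) by ring; lra).
    destruct (Rle_or_lt ((N-8)*s3 - S) 0); [|lra].
    exfalso. assert (((N-8)*s3 - S) * ((N-8)*s3 + S) <= 0); [|lra].
    apply Rmult_le_0_r; lra. }
  set (D := (N-8)*s3 - S) in *.
  assert (HD : S = (N-8)*s3 - D) by (unfold D; ring). clearbody D.
  assert (Hp1 : pJL6 N - 1 = 12*s3/D) by (rewrite HS; rewrite HD; field; nz).
  assert (Hm : mexp N = (N-8)/2 - S/(2*s3)).
  { unfold mexp. rewrite Hp1. rewrite HD. field. nz. }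
  set (u := S/(2*s3)) in *.
  assert (u2 : u^2 = (y + 3*N^2+32)/12) by (unfold u; rewrite <- S2; field_simplify; [rewrite s32; field|nz]).
  assert (upos : 0 < u) by (unfold u; apply Rdiv_lt_0_compat; lra).
  assert (mpos : 0 < mexp N).
  { rewrite Hm. assert (D/(2*s3) = (N-8)/2 - u) by (unfold u; rewrite HD; field; nz).
    assert (0 < D/(2*s3)) by (apply Rdiv_lt_0_compat; lra). lra. }
  split; [exact mpos|]. split; [lra|]. split.
  - assert (pJL6 N = 1 + 6 / mexp N); [|rewrite H0; field; nz].
    rewrite Hm. assert ((N-8)/2 - u = D/(2*s3)) by (unfold u; rewrite HD; field; nz).
    rewrite H0. replace (pJL6 N) with (1 + (pJL6 N - 1)) by ring. rewrite Hp1. field. nz.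
  - rewrite Hm. clearbody u.
    replace ((N - 8) / 2 - u + 2) with ((N-4)/2 - u) by field.
    replace ((N - 8) / 2 - u + 4) with (N/2 - u) by field.
    replace ((N - 8) / 2 - u + 6) with ((N+4)/2 - u) by field.
    replace (N - 2 - ((N - 8) / 2 - u)) with ((N+4)/2 + u) by field.
    replace (N - 4 - ((N - 8) / 2 - u)) with (N/2 + u) by field.
    replace (N - 6 - ((N - 8) / 2 - u)) with ((N-4)/2 + u) by field.
    replace (((N - 4) / 2 - u) * (N / 2 - u) * ((N + 4) / 2 - u) * ((N + 4) / 2 + u) * (N / 2 + u) * ((N - 4) / 2 + u))
      with ((((N - 4) / 2)^2 - u^2) * ((N / 2)^2 - u^2) * (((N + 4) / 2)^2 - u^2)) by ring.
    rewrite u2. unfold fcub, cc in Hy. unfold CC.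
    assert (E : (((N - 4) / 2) ^ 2 - (y + 3 * N ^ 2 + 32) / 12) * ((N / 2) ^ 2 - (y + 3 * N ^ 2 + 32) / 12) *
     (((N + 4) / 2) ^ 2 - (y + 3 * N ^ 2 + 32) / 12) - ((N - 6) * (N - 2) * (N + 2) / 8) ^ 2
     = - (y ^ 3 - 3 * (192 * N ^ 2 + 256) * y - 2 * K0 N) / 1728) by (unfold K0; field).
    lra.
Qed.



Definition Q0 N := let m := mexp N in m*(m+2)*(m+4)*(N-2-m)*(N-4-m)*(N-6-m).

Lemma Q0_facts N : 15 <= N -> 0 < Q0 N /\ pJL6 N * Q0 N = CC N /\
  Rpower (Lconst N) (pJL6 N - 1) = Q0 N /\ 1 < pJL6 N /\ 0 < Lconst N.
Proof.
  intros H. destruct (key N H) as [m0 [m1 [mp mC]]].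
  assert (Qp : 0 < Q0 N).
  { unfold Q0. set (m := mexp N) in *. clearbody m.
    repeat apply Rmult_lt_0_compat; lra. }
  assert (pp : 1 < pJL6 N).
  { rewrite mp. apply (Rmult_lt_reg_r (mexp N)); [lra|]. field_simplify; nz. }
  split; [exact Qp|]. split.
  - rewrite mp, <- mC. unfold Q0. field. nz.
  - split; [|split; [exact pp| unfold Lconst, Rpower; apply exp_pos]].
    unfold Lconst. cbv zeta. rewrite Rpower_mult.
    replace (1 / (pJL6 N - 1) * (pJL6 N - 1)) with 1 by (field; nz).
    apply Rpower_1. exact Qp.
Qed.

Lemma Ppoly_eq N lam : 15 <= N -> Ppoly N lam =
  let x := mexp N + lam in x*(x+2)*(x+4)*(N-2-x)*(N-4-x)*(N-6-x) - CC N.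
Proof.
  intros H. destruct (Q0_facts N H) as [_ [pQ [RL _]]].
  unfold Ppoly. cbv zeta. rewrite RL, pQ. ring.
Qed.

Lemma l_value N lam3 : 15 <= N -> smallest_pos_root N lam3 -> mexp N + lam3 = (N-6)/2.
Proof.
  intros H [l0 [lr lmin]]. destruct (key N H) as [m0 [m1 _]].
  rewrite Ppoly_eq in lr by exact H. cbv zeta in lr.
  set (m := mexp N) in *. assert (Hmm : mexp N = m) by reflexivity. clearbody m.
  assert (Qf : forall x, 0 < x < (N-6)/2 -> x*(x+2)*(x+4)*(N-2-x)*(N-4-x)*(N-6-x) < CC N).
  { intros x Hx. unfold CC.
    set (d := (x - (N-6)/2)^2).
    assert (d < ((N-6)/2)^2) by (unfold d; nra).
    assert (0 < d) by (unfold d; apply pow_lt_compat_l || nra).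
    replace (x*(x+2)*(x+4)*(N-2-x)*(N-4-x)*(N-6-x)) with
      ((((N-6)/2)^2 - d) * (((N-2)/2)^2 - d) * (((N+2)/2)^2 - d)) by (unfold d; field).
    replace (((N - 6) * (N - 2) * (N + 2) / 8) ^ 2) with
      (((N-6)/2)^2 * ((N-2)/2)^2 * ((N+2)/2)^2) by field.
    assert (a1 : ((N-6)/2)^2 < ((N-2)/2)^2) by nra.
    assert (a2 : ((N-2)/2)^2 < ((N+2)/2)^2) by nra.
    assert (0 < ((N-6)/2)^2 - d) by lra.
    apply Rmult_le_0_lt_compat; try nra; try (apply Rmult_le_pos; lra); try (apply Rmult_le_0_lt_compat; lra). }
  destruct (Rtotal_order lam3 ((N-6)/2 - m)) as [Hl|[Hl|Hl]].
  - exfalso. specialize (Qf (m + lam3) ltac:(lra)). lra.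
  - lra.
  - exfalso. apply (lmin ((N-6)/2 - m)); [lra|].
    rewrite Ppoly_eq by exact H. cbv zeta. rewrite Hmm. unfold CC.
    replace (m + ((N - 6) / 2 - m)) with ((N-6)/2) by ring. field.
Qed.



Definition F (A B k R r : R) := A * Rpower r (-k) + B * Rpower r (-k) * ln (r / R).

Lemma Rpower_shift r k : 0 < r -> Rpower r (-k) = Rpower r (-(k+1)) * r.
Proof. intros. replace (-k) with (-(k+1) + 1) by ring. rewrite Rpower_plus, Rpower_1; auto. Qed.

Lemma is_derive_F A B k R r : 0 < r -> 0 < R ->
  is_derive (F A B k R) r (F (-k*A+B) (-k*B) (k+1) R r).
Proof.
  intros Hr HR. unfold F, Rpower.
  auto_derive.
  - repeat split; try apply Rdiv_lt_0_compat; auto.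
  - change (exp (- k * ln r)) with (Rpower r (-k)).
    change (exp (- (k+1) * ln r)) with (Rpower r (-(k+1))).
    rewrite (Rpower_shift r k Hr). unfold Rdiv. field. nz.
Qed.

Lemma locally_pos r : 0 < r -> locally r (fun t => 0 < t).
Proof.
  intros Hr. exists (mkposreal r Hr). intros t Ht.
  change (Rabs (t + - r) < r) in Ht. apply Rabs_def2 in Ht. lra.
Qed.

Definition G2 A1 B1 k1 A2 B2 k2 R t := F A1 B1 k1 R t + F A2 B2 k2 R t.

Lemma is_derive_G2 A1 B1 k1 A2 B2 k2 R r : 0 < r -> 0 < R ->
  is_derive (G2 A1 B1 k1 A2 B2 k2 R) r
    (G2 (-k1*A1+B1) (-k1*B1) (k1+1) (-k2*A2+B2) (-k2*B2) (k2+1) R r).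
Proof.
  intros Hr HR. unfold G2.
  apply (is_derive_plus (F A1 B1 k1 R) (F A2 B2 k2 R)); apply is_derive_F; auto.
Qed.

Lemma Derive_G2 A1 B1 k1 A2 B2 k2 R r : 0 < r -> 0 < R ->
  Derive (G2 A1 B1 k1 A2 B2 k2 R) r =
    G2 (-k1*A1+B1) (-k1*B1) (k1+1) (-k2*A2+B2) (-k2*B2) (k2+1) R r.
Proof. intros. apply is_derive_unique, is_derive_G2; auto. Qed.

Lemma radLap_G2 N A1 B1 k1 A2 B2 k2 R r : 0 < r -> 0 < R ->
  - radLap N (G2 A1 B1 k1 A2 B2 k2 R) r =
  G2 (k1*(N-2-k1)*A1 - (N-2-2*k1)*B1) (k1*(N-2-k1)*B1) (k1+2)
     (k2*(N-2-k2)*A2 - (N-2-2*k2)*B2) (k2*(N-2-k2)*B2) (k2+2) R r.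
Proof.
  intros Hr HR. unfold radLap.
  rewrite (Derive_ext_loc _ (G2 (-k1*A1+B1) (-k1*B1) (k1+1) (-k2*A2+B2) (-k2*B2) (k2+1) R)).
  2:{ generalize (locally_pos r Hr). apply filter_imp. intros t Ht. apply Derive_G2; auto. }
  rewrite !Derive_G2 by auto.
  unfold G2, F.
  rewrite (Rpower_shift r (k1+1)), (Rpower_shift r (k2+1)) by auto.
  replace (-(k1+1+1)) with (-(k1+2)) by ring.
  replace (-(k2+1+1)) with (-(k2+2)) by ring.
  field. nz.
Qed.



Lemma bern_exp p a : 1 <= p -> 1 + p * (exp a - 1) <= exp (p * a).
Proof.
  intros Hp.
  assert (e1 : exp (p*a) = exp a * exp ((p-1)*a)) by (rewrite <- exp_plus; f_equal; ring).
  assert (e2 : 1 + (p-1)*a <= exp ((p-1)*a)) by apply exp_ineq1_le.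
  assert (e3 : 1 + (-a) <= exp (-a)) by apply exp_ineq1_le.
  assert (e4 : exp (-a) * exp a = 1) by (rewrite <- exp_plus; replace (-a+a) with 0 by ring; apply exp_0).
  assert (ep : 0 < exp a) by apply exp_pos.
  assert (e5 : exp a - 1 <= a * exp a).
  { assert ((1 - a) * exp a <= exp (-a) * exp a) by (apply Rmult_le_compat_r; lra). nra. }
  rewrite e1.
  assert (exp a * (1 + (p-1)*a) <= exp a * exp ((p-1)*a)) by (apply Rmult_le_compat_l; lra).
  assert ((p-1) * (exp a - 1) <= (p-1) * (a * exp a)) by (apply Rmult_le_compat_l; lra).
  nra.
Qed.

Lemma bern_Rpower X Y p : 0 < X -> 0 < Y -> 1 <= p ->
  Rpower Y p + p * Rpower Y (p-1) * (X - Y) <= Rpower X p.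
Proof.
  intros HX HY Hp.
  set (z := X / Y).
  assert (zp : 0 < z) by (apply Rdiv_lt_0_compat; auto).
  assert (HXz : X = Y * z) by (unfold z; field; nz).
  rewrite HXz, <- Rpower_mult_distr by auto.
  replace (p - 1) with (p + - (1)) by ring. rewrite Rpower_plus, Rpower_Ropp, Rpower_1 by auto.
  assert (Rpower z p = exp (p * ln z)) by reflexivity.
  assert (z = exp (ln z)) by (rewrite exp_ln; auto).
  pose proof (bern_exp p (ln z) Hp).
  assert (0 < Rpower Y p) by (unfold Rpower; apply exp_pos).
  replace (Rpower Y p + p * (Rpower Y p * / Y) * (Y * z - Y)) with (Rpower Y p * (1 + p * (z - 1))) by (field; nz).
  apply Rmult_le_compat_l; [lra|]. rewrite H. rewrite exp_ln in H1 by auto. lra.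
Qed.


Theorem lemma4p2 (n : nat) (lam3 b Rr r1 r2 r3 : R) :
  (15 <= n)%nat ->
  smallest_pos_root (INR n) lam3 ->
  let l := mexp (INR n) + lam3 in
  0 < b -> 0 < Rr ->
  is_sup_nonpos (u_out (INR n) b Rr l) r1 ->
  is_sup_nonpos (v_out (INR n) b Rr l) r2 ->
  is_sup_nonpos (w_out (INR n) b Rr l) r3 ->
  Rr < r1 -> r1 < r2 -> r2 < r3 ->
  (forall r, 0 < r -> - radLap (INR n) (u_out (INR n) b Rr l) r = v_out (INR n) b Rr l r) /\
  (forall r, 0 < r -> - radLap (INR n) (v_out (INR n) b Rr l) r = w_out (INR n) b Rr l r) /\
  (forall r, r1 < r -> - radLap (INR n) (w_out (INR n) b Rr l) r
                       <= Rpower (u_out (INR n) b Rr l r) (pJL6 (INR n))).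
Proof.
  intros Hn Hroot l Hb HR Hu Hv Hw H1 H2 H3.
  assert (HN : 15 <= INR n) by (apply le_INR in Hn; simpl in Hn; lra).
  assert (Hl : l = (INR n - 6)/2) by (apply l_value; auto).
  destruct (key (INR n) HN) as [m0 [m1 [mp mC]]].
  destruct (Q0_facts (INR n) HN) as [Qp [pQ [RL [p1 Lp]]]].
  set (N := INR n) in *. set (m := mexp N) in *. set (L := Lconst N) in *. set (p := pJL6 N) in *.
  clearbody l.
  assert (Eu : u_out N b Rr l = G2 L 0 m 0 (-b) l Rr).
  { apply functional_extensionality. intro t. unfold u_out, G2, F. fold m L. ring. }
  assert (Ev : v_out N b Rr l = G2 (m*(N-2-m)*L) 0 (m+2) ((N-2-2*l)*b) (-l*(N-2-l)*b) (l+2) Rr).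
  { apply functional_extensionality. intro t. unfold v_out, G2, F. cbv zeta. fold m L.
    replace (-(m+2)) with (-m-2) by ring. replace (-(l+2)) with (-l-2) by ring. ring. }
  assert (Ew : w_out N b Rr l = G2 (m*(m+2)*(N-2-m)*(N-4-m)*L) 0 (m+4)
              ((N-2-2*l)*(l+2)*(N-4-l)*b) (-l*(l+2)*(N-2-l)*(N-4-l)*b) (l+4) Rr).
  { apply functional_extensionality. intro t. unfold w_out, G2, F. cbv zeta. fold m L.
    replace (-(m+4)) with (-m-4) by ring. replace (-(l+4)) with (-l-4) by ring. ring. }
  split; [|split].
  - intros r Hr. rewrite Eu, radLap_G2 by auto. rewrite Ev. unfold G2, F. ring.
  - intros r Hr. rewrite Ev, radLap_G2 by auto. rewrite Ew. unfold G2, F.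
    replace (m+2+2) with (m+4) by ring. replace (l+2+2) with (l+4) by ring.
    subst l. field.
  - intros r Hr.
    assert (r0 : 0 < r) by lra.
    assert (Xp : 0 < u_out N b Rr l r).
    { destruct (Rle_or_lt (u_out N b Rr l r) 0) as [h|h]; [|exact h].
      exfalso. destruct Hu as [Hub _]. assert (r <= r1) by (apply Hub; split; auto). lra. }
    assert (Rm : 0 < Rpower r (-m)) by (unfold Rpower; apply exp_pos).
    set (Y := L * Rpower r (-m)).
    assert (Yp : 0 < Y) by (unfold Y; apply Rmult_lt_0_compat; auto).
    eapply Rle_trans; [|apply (bern_Rpower _ Y p Xp Yp); lra].
    assert (f1 : Rpower Y p = L*Q0 N*Rpower r (-(m+4+2))).
    { unfold Y. rewrite <- Rpower_mult_distr by auto. rewrite Rpower_mult.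
      replace (-m*p) with (-(m+4+2)) by (rewrite mp; field; nz).
      replace p with (1 + (p-1)) at 1 by ring. rewrite Rpower_plus, Rpower_1, RL by auto. ring. }
    assert (f2 : Rpower Y (p-1) = Q0 N * Rpower r (-6)).
    { unfold Y. rewrite <- Rpower_mult_distr by auto. rewrite Rpower_mult, RL.
      replace (-m*(p-1)) with (-6) by (rewrite mp; field; nz). ring. }
    assert (f3 : u_out N b Rr l r - Y = -b * Rpower r (-l) * ln (r/Rr)).
    { rewrite Eu. unfold G2, F, Y. ring. }
    assert (f4 : Rpower r (-6) * Rpower r (-l) = Rpower r (-(l+4+2))).
    { rewrite <- Rpower_plus. f_equal. ring. }
    rewrite f1, f2, f3. rewrite Ew, radLap_G2 by auto. unfold G2, F.
    replace (p * (Q0 N * Rpower r (-6)) * (- b * Rpower r (- l) * ln (r / Rr)))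
      with (- (p * Q0 N) * b * (Rpower r (-6) * Rpower r (-l)) * ln (r / Rr)) by ring.
    rewrite f4, pQ.
    set (Pm := Rpower r (-(m+4+2))). set (Pl := Rpower r (-(l+4+2))). set (Lg := ln (r/Rr)).
    clearbody Pm Pl Lg. unfold Q0, CC. fold m. subst l.
    right. field.
Qed.
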